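(* Assume $M$ is projective in $\sigma[M]$ and let $X\in\sigma[M]$ with $X=\bigoplus_{\lambda\in\Lambda}X_\lambda$ an internal direct sum of submodules $X_\lambda$. Then $\mathrm{rad}_M(X)=\bigoplus_{\lambda\in\Lambda}\mathrm{rad}_M(X_\lambda)$.
   Context: $R$ is a ring with identity, modules are unital left $R$-modules, $M$ is a fixed left $R$-module; $\sigma[M]$ is the full subcategory of $R$-modules isomorphic to submodules of $M$-generated modules. For $N\le M$ and a module $X$, $N\cdot X$ is the intersection of the kernels of all homomorphisms $X\to W$ where $W$ ranges over modules with $f(N)=0$ for all $f\in\mathrm{Hom}_R(M,W)$ (for $Z\le X$, $N\cdot Z$ is formed regarding $Z$ as a module). A proper submodule $P$ of a module $X$ is $M$-prime if for all $N\le M$, $Z\le X$, $N\cdot Z\subseteq P$ implies $N\cdot X\subseteq P$ or $Z\subseteq P$. $\mathrm{rad}_M(X)$ is the intersection of all $M$-prime submodules of $X$ if $X$ has at least one, and $\mathrm{rad}_M(X)=X$ otherwise. *)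

(* Defs.v *)
(* Left modules over a (possibly noncommutative) ring R with
   identity are mathcomp's [lmodType R] (unital: scale1r).  Submodules are
   predicates [V -> Prop]; homomorphisms are mathcomp linear maps. *)
From HB Require Import structures.
From mathcomp Require Import all_boot all_order all_algebra.
From Stdlib Require List.
Set Implicit Arguments. Unset Strict Implicit. Unset Printing Implicit Defensive.
Import GRing.Theory.
Local Open Scope ring_scope.

Section Defs.
Variable R : pzRingType.

Definition submod (V : lmodType R) (S : V -> Prop) : Prop :=
  S 0 /\ (forall x y, S x -> S y -> S (x + y)) /\
  (forall (a : R) x, S x -> S (a *: x)).

Definition subset_of (V : Type) (A B : V -> Prop) : Prop := forall x, A x -> B x.

(* f : V -> W restricts to an R-homomorphism Z -> W on the submodule Z of V.
   (Homomorphisms from Z regarded as a module correspond exactly to such f,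
   up to values outside Z.) *)
Definition hom_on (V W : lmodType R) (Z : V -> Prop) (f : V -> W) : Prop :=
  (forall x y, Z x -> Z y -> f (x + y) = f x + f y) /\
  (forall (a : R) x, Z x -> f (a *: x) = a *: f x).

Definition kills (M W : lmodType R) (N : M -> Prop) : Prop :=
  forall (f : {linear M -> W}) n, N n -> f n = 0.

(* N . Z  (Z a submodule of V, regarded as a module): intersection of kernels
   of all homomorphisms Z -> W, W ranging over modules with f(N)=0 for all
   f in Hom(M,W). *)
Definition dotM (M : lmodType R) (N : M -> Prop) (V : lmodType R)
  (Z : V -> Prop) : V -> Prop :=
  fun z => Z z /\ forall (W : lmodType R), kills W N ->
    forall f : V -> W, hom_on Z f -> f z = 0.

Definition Mprime_in (M V : lmodType R) (Z P : V -> Prop) : Prop :=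
  submod P /\ subset_of P Z /\ (exists x, Z x /\ ~ P x) /\
  forall (N : M -> Prop) (Z' : V -> Prop), submod N -> submod Z' ->
    subset_of Z' Z ->
    subset_of (dotM N Z') P -> subset_of (dotM N Z) P \/ subset_of Z' P.

(* rad_M of the module Z (a submodule of V regarded as a module):
   intersection of all M-prime submodules of Z, or Z if there are none. *)
Definition radM_in (M V : lmodType R) (Z : V -> Prop) : V -> Prop :=
  fun x => Z x /\ forall P, Mprime_in M Z P -> P x.

Definition fullset (V : Type) : V -> Prop := fun _ => True.

Definition radM (M X : lmodType R) : X -> Prop := radM_in M (@fullset X).

Definition M_generated (M Y : lmodType R) : Prop :=
  forall y : Y, exists s : seq ({linear M -> Y} * M)%type,
    y = \sum_(p <- s) p.1 p.2.

Definition in_sigma (M X : lmodType R) : Prop :=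
  exists (Y : lmodType R) (g : {linear X -> Y}), M_generated M Y /\ injective g.

Definition projective_in_sigma (M : lmodType R) : Prop :=
  forall (A B : lmodType R), in_sigma M A -> in_sigma M B ->
  forall (g : {linear A -> B}), (forall b, exists a, g a = b) ->
  forall (f : {linear M -> B}), exists h : {linear M -> A},
    forall m, g (h m) = f m.

Definition internal_direct_sum (X : lmodType R) (L : Type)
  (Xs : L -> X -> Prop) : Prop :=
  (forall l, submod (Xs l)) /\
  (forall x : X, exists s : seq (L * X)%type,
     (forall p, List.In p s -> Xs p.1 p.2) /\ x = \sum_(p <- s) p.2) /\
  (forall (l : L) (s : seq (L * X)%type),
     (forall p, List.In p s -> p.1 <> l /\ Xs p.1 p.2) ->
     Xs l (\sum_(p <- s) p.2) -> \sum_(p <- s) p.2 = 0).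

End Defs.

(* Main.v *)
Require Import Defs.
From HB Require Import structures.
From mathcomp Require Import all_boot all_order all_algebra.
From Stdlib Require List.
From Stdlib Require Import ClassicalEpsilon FunctionalExtensionality PropExtensionality Setoid Morphisms.
Set Implicit Arguments. Unset Strict Implicit. Unset Printing Implicit Defensive.
Import GRing.Theory.
Local Open Scope ring_scope.

Section Quot.
Variables (R : pzRingType) (V : lmodType R) (S : V -> Prop) (HS : submod S).

Lemma S0 : S 0. Proof. by case: HS. Qed.
Lemma SD x y : S x -> S y -> S (x + y). Proof. by case: HS => _ [h _]; apply: h. Qed.
Lemma SZ a x : S x -> S (a *: x). Proof. by case: HS => _ [_ h]; apply: h. Qed.
Lemma SN x : S x -> S (- x). Proof. move=> h; have := SZ (-1) h; by rewrite scaleN1r. Qed.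
Lemma SB x y : S x -> S y -> S (x - y). Proof. by move=> h1 h2; apply: SD => //; apply: SN. Qed.

Definition qeqv (x y : V) := S (x - y).
Lemma qeqv_refl x : qeqv x x. Proof. by rewrite /qeqv subrr; apply: S0. Qed.
Lemma qeqv_sym x y : qeqv x y -> qeqv y x.
Proof. by rewrite /qeqv => h; rewrite -opprB; apply: SN. Qed.
Lemma qeqv_trans x y z : qeqv x y -> qeqv y z -> qeqv x z.
Proof. by rewrite /qeqv => h1 h2; have := SD h1 h2; rewrite addrA subrK. Qed.

Add Parametric Relation : V qeqv
  reflexivity proved by qeqv_refl symmetry proved by qeqv_sym
  transitivity proved by qeqv_trans as qeqv_rel.

Add Parametric Morphism : (@GRing.add V) with signature qeqv ==> qeqv ==> qeqv as qadd_mor.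
Proof.
move=> x y h1 u v h2; rewrite /qeqv.
have -> : x + u - (y + v) = (x - y) + (u - v) by rewrite opprD addrACA.
exact: SD.
Qed.
Add Parametric Morphism : (@GRing.opp V) with signature qeqv ==> qeqv as qopp_mor.
Proof. by move=> x y h; rewrite /qeqv -opprD; apply: SN. Qed.
Add Parametric Morphism a : (@GRing.scale R V a) with signature qeqv ==> qeqv as qscale_mor.
Proof. by move=> x y h; rewrite /qeqv -scalerBr; apply: SZ. Qed.

Definition canon (x : V) : V := epsilon (inhabits (0:V)) (fun y => S (x - y)).
Lemma canon_eqv x : qeqv (canon x) x.
Proof.
apply: qeqv_sym; rewrite /canon; apply: (epsilon_spec (inhabits (0:V)) (fun y => S (x - y))).
by exists x; apply: qeqv_refl.
Qed.
Lemma canon_eq x y : qeqv x y -> canon x = canon y.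
Proof.
move=> h; rewrite /canon.
suff -> : (fun z => S (x - z)) = (fun z => S (y - z)) by [].
apply: functional_extensionality => z; apply: propositional_extensionality.
split => h'.
- by apply: (qeqv_trans (qeqv_sym h) h').
- by apply: (qeqv_trans h h').
Qed.
Lemma canon_idem x : canon (canon x) = canon x.
Proof. by apply: canon_eq; apply: canon_eqv. Qed.

Definition quot : Type := let _ := HS in {x : V | canon x == x}.
HB.instance Definition _ := Choice.on quot.

Definition qpi (x : V) : quot := exist _ (canon x) (introT eqP (canon_idem x)).
Lemma qpi_eq x y : qeqv x y -> qpi x = qpi y.
Proof. by move=> h; apply: val_inj; rewrite /= (canon_eq h). Qed.
Lemma qpi_eqE x y : qpi x = qpi y -> qeqv x y.
Proof.
move=> h; have : canon x = canon y by have := congr1 val h.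
move=> e; apply: (qeqv_trans (qeqv_sym (canon_eqv x))); rewrite e; apply: canon_eqv.
Qed.
Lemma qval_eqv (a : quot) : qeqv (val a) (val a). Proof. exact: qeqv_refl. Qed.
Lemma qpi_val (a : quot) : qpi (val a) = a.
Proof. by apply: val_inj => /=; apply/eqP; case: a. Qed.
Lemma val_qpi x : qeqv (val (qpi x)) x. Proof. exact: canon_eqv. Qed.

Definition qzero := qpi 0.
Definition qadd (a b : quot) := qpi (val a + val b).
Definition qopp (a : quot) := qpi (- val a).
Definition qscale r (a : quot) := qpi (r *: val a).

Lemma qaddA : associative qadd.
Proof.
move=> a b c; apply: qpi_eq; rewrite !val_qpi addrA; reflexivity.
Qed.
Lemma qaddC : commutative qadd.
Proof. by move=> a b; rewrite /qadd addrC. Qed.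
Lemma qadd0 : left_id qzero qadd.
Proof. move=> a; rewrite -[RHS]qpi_val; apply: qpi_eq; rewrite val_qpi add0r; reflexivity. Qed.
Lemma qaddN : left_inverse qzero qopp qadd.
Proof. move=> a; apply: qpi_eq; rewrite val_qpi addNr; reflexivity. Qed.
HB.instance Definition _ := GRing.isZmodule.Build quot qaddA qaddC qadd0 qaddN.

Lemma qscaleA a b v : qscale a (qscale b v) = qscale (a * b) v.
Proof. apply: qpi_eq; rewrite val_qpi scalerA; reflexivity. Qed.
Lemma qscale1 : left_id 1 qscale.
Proof. move=> a; rewrite -[RHS]qpi_val; apply: qpi_eq; rewrite scale1r; reflexivity. Qed.
Lemma qscaleDr : right_distributive qscale +%R.
Proof. move=> a u v; have -> : u + v = qadd u v by []. apply: qpi_eq; rewrite !val_qpi scalerDr; reflexivity. Qed.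
Lemma qscaleDl v : {morph qscale^~ v: a b / a + b}.
Proof. move=> a b; rewrite /qscale /=. have -> : forall x y : quot, x + y = qadd x y by []. apply: qpi_eq; rewrite !val_qpi scalerDl; reflexivity. Qed.
HB.instance Definition _ := GRing.Zmodule_isLmodule.Build R quot qscaleA qscale1 qscaleDr qscaleDl.

Lemma qaddE (x y : quot) : x + y = qpi (val x + val y). Proof. by []. Qed.
Lemma qscaleE r (x : quot) : r *: x = qpi (r *: val x). Proof. by []. Qed.
Lemma qzeroE : (0 : quot) = qpi 0. Proof. by []. Qed.
Lemma qoppE (x : quot) : - x = qpi (- val x). Proof. by []. Qed.
Lemma qpi_linear : linear qpi.
Proof. move=> a u v; rewrite qaddE qscaleE; apply: qpi_eq; rewrite !val_qpi; reflexivity. Qed.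
Lemma qpi0 x : qpi x = 0 <-> S x.
Proof. rewrite qzeroE; split=> [/qpi_eqE|h]; rewrite /qeqv ?subr0 //; apply: qpi_eq; rewrite /qeqv subr0. exact h. Qed.
Lemma qpi_surj (a : quot) : exists x, qpi x = a. Proof. by exists (val a); apply: qpi_val. Qed.
End Quot.
Section Sub.
Variables (R : pzRingType) (V : lmodType R) (Z : V -> Prop) (HZ : submod Z).
Definition zb (x : V) : bool := if excluded_middle_informative (Z x) then true else false.
Lemma zbP x : zb x <-> Z x.
Proof. by rewrite /zb; case: excluded_middle_informative. Qed.
Lemma Z0 : Z 0. Proof. by case: HZ. Qed.
Lemma ZD x y : Z x -> Z y -> Z (x + y). Proof. by case: HZ => _ [h _]; apply: h. Qed.
Lemma ZZ a x : Z x -> Z (a *: x). Proof. by case: HZ => _ [_ h]; apply: h. Qed.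
Lemma ZN x : Z x -> Z (- x). Proof. move=> h; have := ZZ (-1) h; by rewrite scaleN1r. Qed.
Lemma ZB x y : Z x -> Z y -> Z (x - y). Proof. by move=> h1 h2; apply: ZD => //; apply: ZN. Qed.

Definition subm : Type := let _ := HZ in {x : V | zb x}.
HB.instance Definition _ := Choice.on subm.
Definition smk x (h : Z x) : subm := exist _ x (proj2 (zbP x) h).
Lemma sval_in (a : subm) : Z (val a). Proof. by apply/zbP; case: a. Qed.
Definition szero : subm := smk Z0.
Definition sadd (a b : subm) : subm := smk (ZD (sval_in a) (sval_in b)).
Definition sopp (a : subm) : subm := smk (ZN (sval_in a)).
Definition sscale r (a : subm) : subm := smk (ZZ r (sval_in a)).
Lemma saddA : associative sadd. Proof. by move=> a b c; apply: val_inj; rewrite /= addrA. Qed.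
Lemma saddC : commutative sadd. Proof. by move=> a b; apply: val_inj; rewrite /= addrC. Qed.
Lemma sadd0 : left_id szero sadd. Proof. by move=> a; apply: val_inj; rewrite /= add0r. Qed.
Lemma saddN : left_inverse szero sopp sadd. Proof. by move=> a; apply: val_inj; rewrite /= addNr. Qed.
HB.instance Definition _ := GRing.isZmodule.Build subm saddA saddC sadd0 saddN.
Lemma sscaleA a b v : sscale a (sscale b v) = sscale (a * b) v.
Proof. by apply: val_inj; rewrite /= scalerA. Qed.
Lemma sscale1 : left_id 1 sscale. Proof. by move=> a; apply: val_inj; rewrite /= scale1r. Qed.
Lemma sscaleDr : right_distributive sscale +%R.
Proof. by move=> a u v; apply: val_inj; rewrite /= scalerDr. Qed.
Lemma sscaleDl v : {morph sscale^~ v: a b / a + b}.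
Proof. by move=> a b; apply: val_inj; rewrite /= scalerDl. Qed.
HB.instance Definition _ := GRing.Zmodule_isLmodule.Build R subm sscaleA sscale1 sscaleDr sscaleDl.
Lemma svalD (a b : subm) : val (a + b) = val a + val b. Proof. by []. Qed.
Lemma svalZ r (a : subm) : val (r *: a) = r *: val a. Proof. by []. Qed.
Lemma sval_linear : linear (fun a : subm => val a). Proof. by []. Qed.
End Sub.

Section Lin.
Variable R : pzRingType.
Definition mklin (U V : lmodType R) (f : U -> V) (H : linear f) : {linear U -> V} :=
  HB.pack f (GRing.isLinear.Build R U V *:%R f H).
Lemma mklinE (U V : lmodType R) (f : U -> V) (H : linear f) x : mklin H x = f x.
Proof. by []. Qed.
End Lin.

Section Sigma.
Variables (R : pzRingType) (M : lmodType R).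

Lemma comp_linear (U V W : lmodType R) (f : {linear U -> V}) (g : {linear V -> W}) :
  linear (fun x => g (f x)).
Proof. by move=> r a b; rewrite !linearP. Qed.

Lemma sub_sigma (X : lmodType R) (Z : X -> Prop) (HZ : submod Z) :
  in_sigma M X -> in_sigma M (subm HZ).
Proof.
move=> [Y [g [HY gi]]].
have lin : linear (fun a : subm HZ => g (val a)).
  by move=> r a b; rewrite svalD svalZ linearP.
exists Y, (mklin lin); split => // a b; rewrite !mklinE => /gi /val_inj //.
Qed.

Lemma quot_Mgen (Y : lmodType R) (T : Y -> Prop) (HT : submod T) :
  M_generated M Y -> M_generated M (quot HT).
Proof.
move=> HY y'; have [y <-] := qpi_surj y'.
have [s ->] := HY y.
pose ql := mklin (qpi_linear HT).
exists [seq (mklin (comp_linear p.1 ql), p.2) | p <- s].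
rewrite big_map -[qpi HT _]/(ql _) raddf_sum; apply: eq_bigr => p _.
by rewrite mklinE.
Qed.
End Sigma.

Section Key.
Variables (R : pzRingType) (M : lmodType R).

Definition img (X : lmodType R) (rho : X -> X) (Z : X -> Prop) : X -> Prop :=
  fun v => exists z, Z z /\ v = rho z.

Lemma img_submod (X : lmodType R) (rho : X -> X) (hr : linear rho) (Z : X -> Prop) :
  submod Z -> submod (img rho Z).
Proof.
move=> HZ; pose rl := mklin hr.
split; [|split].
- exists 0; split; first exact: Z0 HZ.
  by change (0 = rl 0); rewrite raddf0.
- move=> _ _ [a [Ha ->]] [b [Hb ->]]; exists (a + b); split; first exact: ZD.
  by change (rl a + rl b = rl (a + b)); rewrite raddfD.
- move=> r _ [a [Ha ->]]; exists (r *: a); split; first exact: ZZ.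
  by change (r *: rl a = rl (r *: a)); rewrite linearZ.
Qed.

Lemma hom_on0 (X W : lmodType R) (Z : X -> Prop) (f : X -> W) :
  submod Z -> hom_on Z f -> f 0 = 0.
Proof.
move=> HZ [hD _]; have := hD 0 0 (Z0 HZ) (Z0 HZ).
rewrite addr0 => e; have := congr1 (fun t => t - f 0) e; by rewrite /= subrr addrK.
Qed.

Lemma dot_submod (N : M -> Prop) (X : lmodType R) (Z : X -> Prop) :
  submod Z -> submod (dotM N Z).
Proof.
move=> HZ; split; [|split].
- split; first exact: Z0 HZ.
  by move=> W _ f hf; apply: hom_on0 hf.
- move=> x y [Zx hx] [Zy hy]; split; first exact: ZD.
  move=> W kW f hf; have [hD _] := hf.
  by rewrite hD // (hx W kW f hf) (hy W kW f hf) addr0.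
- move=> r x [Zx hx]; split; first exact: ZZ.
  move=> W kW f hf; have [_ hZ] := hf.
  by rewrite hZ // (hx W kW f hf) scaler0.
Qed.
End Key.

Section KeyLemma.
Variables (R : pzRingType) (M X : lmodType R).
Hypothesis Hproj : projective_in_sigma M.
Hypothesis HX : in_sigma M X.
Variables (rho : X -> X) (hr : linear rho) (N : M -> Prop) (Z : X -> Prop) (HZ : submod Z).

Let A := subm HZ.
Let K := img rho (dotM N Z).
Let HK : submod K := img_submod hr (dot_submod N HZ).
Let rv (a : A) := rho (val a).
Let rv_lin : linear rv := comp_linear (mklin (@sval_linear _ _ _ HZ)) (mklin hr).
Let rvl := mklin rv_lin.
Let rvD a b : rv (a + b) = rv a + rv b. Proof. exact: (raddfD rvl). Qed.
Let rvB a b : rv (a - b) = rv a - rv b. Proof. exact: (raddfB rvl). Qed.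
Let rvZ r a : rv (r *: a) = r *: rv a. Proof. by change (rvl (r *: a) = r *: rvl a); rewrite linearZ. Qed.
Let rv0 : rv 0 = 0. Proof. exact: (raddf0 rvl). Qed.

Let SA : A -> Prop := fun a => K (rv a).
Lemma HSA : submod SA.
Proof.
split; [|split].
- by rewrite /SA rv0; apply: Z0 HK.
- by move=> a b ha hb; rewrite /SA rvD; apply: ZD.
- by move=> r a ha; rewrite /SA rvZ; apply: ZZ.
Qed.

Let W := quot HSA.
Let ql := mklin (qpi_linear HSA).
Let qD a b : qpi HSA a + qpi HSA b = qpi HSA (a + b). Proof. by rewrite -(raddfD ql). Qed.
Let qZ r a : r *: qpi HSA a = qpi HSA (r *: a). Proof. by change (r *: ql a = ql (r *: a)); rewrite linearZ. Qed.

Definition pick (u : X) : A := epsilon (inhabits 0) (fun a : A => rv a = u).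
Lemma pickP u : img rho Z u -> rv (pick u) = u.
Proof.
move=> [z [Zz ->]]; rewrite /pick.
apply: (epsilon_spec (inhabits (0:A)) (fun a : A => rv a = rho z)).
by exists (smk HZ Zz).
Qed.
Definition ff (u : X) : W := qpi HSA (pick u).
Lemma ff_hom : hom_on (img rho Z) ff.
Proof.
have HI := img_submod hr HZ.
split.
- move=> u u' hu hu'; rewrite /ff qD; apply: qpi_eq.
  rewrite /qeqv /SA rvB rvD !pickP //; last exact: ZD.
  by rewrite subrr; apply: Z0 HK.
- move=> r u hu; rewrite /ff qZ; apply: qpi_eq.
  rewrite /qeqv /SA rvB rvZ !pickP //; last exact: ZZ.
  by rewrite subrr; apply: Z0 HK.
Qed.
Lemma ff_ker u : img rho Z u -> ff u = 0 -> K u.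
Proof. by move=> hu /qpi0 h; rewrite -(pickP hu); apply: h. Qed.

Lemma W_sigma : in_sigma M W.
Proof.
have [Y [e [HY ei]]] := HX.
pose T := fun y => exists k, K k /\ y = e k.
have HT : submod T.
  split; [|split].
  - by exists 0; split; [apply: Z0 HK | rewrite raddf0].
  - move=> _ _ [a [Ha ->]] [b [Hb ->]]; exists (a + b); split; [exact: ZD | by rewrite raddfD].
  - move=> r _ [a [Ha ->]]; exists (r *: a); split; [exact: ZZ | by rewrite linearZ].
pose phi := fun w : W => qpi HT (e (rv (val w))).
have phiq : forall b, phi (qpi HSA b) = qpi HT (e (rv b)).
  move=> b; apply: qpi_eq; rewrite /qeqv -raddfB -rvB.
  exists (rv (val (qpi HSA b) - b)); split => //.
  by have := val_qpi HSA b.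
have phil : linear phi.
  move=> r w1 w2; rewrite -(qpi_val w1) -(qpi_val w2) qZ qD !phiq.
  by rewrite rvD rvZ linearP; apply: qpi_linear.
exists (quot HT), (mklin phil); split; first exact: quot_Mgen.
move=> w1 w2; rewrite !mklinE /phi => /qpi_eqE [k [Kk]].
rewrite -raddfB => /ei; rewrite -rvB => ek.
rewrite -(qpi_val w1) -(qpi_val w2); apply: qpi_eq; rewrite /qeqv /SA ek //.
Qed.

Lemma W_kills : kills W N.
Proof.
move=> h n Nn.
have surj : forall b : W, exists a : A, ql a = b.
  move=> b; case: (@qpi_surj _ _ _ HSA b) => a ea; exists a; by rewrite -ea.
have [h' Hh'] := Hproj (sub_sigma HZ HX) W_sigma surj h.
rewrite -Hh' mklinE; apply/qpi0; exists (val (h' n)); split => //.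
split; first exact: sval_in.
move=> W' kW' g [gD gZ].
have gl : linear (fun m => g (val (h' m))).
  move=> r m1 m2; rewrite linearP svalD svalZ gD ?gZ //; try exact: sval_in.
  by apply: (ZZ HZ); apply: sval_in.
by have := kW' (mklin gl) n Nn; rewrite mklinE.
Qed.

Lemma key_dot v : dotM N (img rho Z) v -> img rho (dotM N Z) v.
Proof.
move=> [Iv hv]; apply: ff_ker => //.
exact: hv W W_kills ff ff_hom.
Qed.
End KeyLemma.

Section DS.
Variables (R : pzRingType) (X : lmodType R) (L : Type) (Xs : L -> X -> Prop).
Hypothesis Hds : internal_direct_sum Xs.

Let Hsub : forall l, submod (Xs l). Proof. by case: Hds. Qed.
Let Hdec := proj1 (proj2 Hds).
Let Hind := proj2 (proj2 Hds).

Definition eqb (l l' : L) : bool := if excluded_middle_informative (l = l') then true else false.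
Lemma eqbP l l' : reflect (l = l') (eqb l l').
Proof. by rewrite /eqb; case: excluded_middle_informative => h; constructor. Qed.

Lemma eqbN l l' : ~~ eqb l l' -> l <> l'.
Proof. by case: eqbP. Qed.
Lemma eqb_refl l : eqb l l. Proof. by apply/eqbP. Qed.

Definition valid (s : seq (L * X)) := forall p, List.In p s -> Xs p.1 p.2.
Definition sumf l (s : seq (L * X)) := \sum_(p <- s | eqb p.1 l) p.2.

Lemma In_filter (P : pred (L * X)) p s : List.In p [seq q <- s | P q] -> List.In p s /\ P p.
Proof.
elim: s => //= a s IH; case: ifP => Pa /=.
- by case=> [<-|/IH [h1 h2]]; [split; [left|] | split; [right|]].
- by move=> /IH [h1 h2]; split; [right|].
Qed.
Lemma In_map (f : L * X -> L * X) q s : List.In q [seq f p | p <- s] -> exists p, List.In p s /\ q = f p.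
Proof.
elim: s => //= a s IH; case=> [<-|/IH [p [h1 h2]]]; first by exists a; split; [left|].
by exists p; split; [right|].
Qed.
Lemma In_cat p (s1 s2 : seq (L * X)) : List.In p (s1 ++ s2) -> List.In p s1 \/ List.In p s2.
Proof.
elim: s1 => //= [|a s IH]; first by right.
by case=> [<-|/IH [h|h]]; [left; left | left; right | right].
Qed.

Lemma sumf_in l s : valid s -> Xs l (sumf l s).
Proof.
elim: s => [|a s IH] hv; first by rewrite /sumf big_nil; apply: Z0 (Hsub l).
rewrite /sumf big_cons; have IH' : Xs l (sumf l s).
  by apply: IH => p hp; apply: hv; right.
case: eqbP => [e|_]; last exact: IH'.
apply: (ZD (Hsub l) _ IH'); rewrite -e; apply: hv; by left.
Qed.

Lemma sum_split l (s : seq (L * X)) :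
  \sum_(p <- s) p.2 = sumf l s + \sum_(p <- s | ~~ eqb p.1 l) p.2.
Proof. by rewrite (bigID (fun p => eqb p.1 l)). Qed.

Lemma uniq_dec l s s' : valid s -> valid s' ->
  \sum_(p <- s) p.2 = \sum_(p <- s') p.2 -> sumf l s = sumf l s'.
Proof.
move=> vs vs' H.
pose t := [seq p <- s | ~~ eqb p.1 l] ++ [seq (p.1, - p.2) | p <- [seq p <- s' | ~~ eqb p.1 l]].
have Ht : forall p, List.In p t -> p.1 <> l /\ Xs p.1 p.2.
  move=> p /In_cat [/In_filter [h1 h2]|/In_map [q [/In_filter [h1 h2] ->]]].
  - by split; [apply: eqbN | apply: vs].
  - split; [by apply: eqbN | rewrite /=; apply: (ZN (Hsub _)); exact: vs'].
have St : \sum_(p <- t) p.2 = sumf l s' - sumf l s.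
  rewrite big_cat big_map /= !big_filter sumrN.
  move: H; rewrite (sum_split l s) (sum_split l s') => H.
  set a := sumf l s in H *; set a' := sumf l s' in H *.
  set b := \sum_(p <- s | _) _ in H *; set b' := \sum_(p <- s' | _) _ in H *.
  have -> : b = - a + (a' + b') by rewrite -H addKr.
  by rewrite -addrA addrK addrC.
have := Hind Ht; rewrite St => /(_ (ZB (Hsub l) (sumf_in l vs') (sumf_in l vs))).
by move/subr0_eq.
Qed.

Lemma valid_cat s1 s2 : valid s1 -> valid s2 -> valid (s1 ++ s2).
Proof. by move=> h1 h2 p /In_cat [h|h]; [apply: h1 | apply: h2]. Qed.

Definition dec (x : X) : seq (L * X) :=
  epsilon (inhabits [::]) (fun s => valid s /\ x = \sum_(p <- s) p.2).
Lemma decP x : valid (dec x) /\ x = \sum_(p <- dec x) p.2.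
Proof.
apply: (epsilon_spec (inhabits [::]) (fun s => valid s /\ x = \sum_(p <- s) p.2)).
exact: Hdec.
Qed.
Definition pr l x := sumf l (dec x).
Lemma prE l x s : valid s -> x = \sum_(p <- s) p.2 -> pr l x = sumf l s.
Proof.
move=> vs e; have [vd ed] := decP x; apply: uniq_dec => //.
by rewrite -ed -e.
Qed.

Lemma pr_linear l : linear (pr l).
Proof.
move=> a x y; have [vx ex] := decP x; have [vy ey] := decP y.
pose s := [seq (p.1, a *: p.2) | p <- dec x] ++ dec y.
have vs : valid s.
  apply: valid_cat => // p /In_map [q [hq ->]] /=; apply: (ZZ (Hsub _)); exact: vx.
rewrite (prE l vs); last by rewrite big_cat big_map /= -scaler_sumr -ex -ey.
by rewrite /sumf big_cat big_map /= -scaler_sumr.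
Qed.
Lemma pr_in l x : Xs l (pr l x).
Proof. exact: sumf_in (proj1 (decP x)). Qed.
Lemma pr_id l v : Xs l v -> pr l v = v.
Proof.
move=> hv; have vs : valid [:: (l, v)] by move=> p [<-|].
rewrite (prE l vs); last by rewrite big_cons big_nil addr0.
by rewrite /sumf big_cons eqb_refl big_nil addr0.
Qed.

Fixpoint dist (t : seq (L * X)) : Prop :=
  match t with [::] => True | a :: t' => (forall q, List.In q t' -> a.1 <> q.1) /\ dist t' end.
Lemma dist_filter (P : pred (L * X)) t : dist t -> dist [seq q <- t | P q].
Proof.
elim: t => //= a t IH [h1 h2]; case: ifP => _ /=; last exact: IH.
split; last exact: IH.
by move=> q /In_filter [hq _]; apply: h1.
Qed.

Lemma exists_dist s : valid s -> exists t, valid t /\ dist t /\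
  \sum_(p <- s) p.2 = \sum_(p <- t) p.2.
Proof.
elim: s => [|p s IH] vs; first by exists [::]; split; [move=> ? []|split; [|rewrite !big_nil]].
have [t1 [v1 [d1 e1]]] : exists t, valid t /\ dist t /\ \sum_(p <- s) p.2 = \sum_(p <- t) p.2.
  by apply: IH => q hq; apply: vs; right.
exists ((p.1, p.2 + sumf p.1 t1) :: [seq q <- t1 | ~~ eqb q.1 p.1]); split; [|split].
- move=> q [<-|/In_filter [hq _]]; last exact: v1.
  rewrite /=; apply: (ZD (Hsub _)); [apply: vs; left | apply: sumf_in] => //.
- split; last exact: dist_filter.
  move=> q /In_filter [_ hq] /= e; apply: (eqbN hq); by rewrite -e.
- by rewrite !big_cons /= big_filter e1 (sum_split p.1 t1) addrA.
Qed.

Lemma sumf_none l t : (forall q, List.In q t -> l <> q.1) -> sumf l t = 0.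
Proof.
elim: t => [|a t IH] h; first by rewrite /sumf big_nil.
rewrite /sumf big_cons; case: eqbP => [e|_].
- by exfalso; apply: (h a); [left|].
- by apply: IH => q hq; apply: h; right.
Qed.

Lemma dist_sumf t p : dist t -> List.In p t -> sumf p.1 t = p.2.
Proof.
elim: t => //= a t IH [h1 h2] [<-|hp].
- by rewrite /sumf big_cons eqb_refl -/(sumf a.1 t) sumf_none // addr0.
- rewrite /sumf big_cons; case: eqbP => [e|_]; first by exfalso; apply: (h1 p).
  exact: IH.
Qed.
End DS.

Section Main.
Variables (R : pzRingType) (M X : lmodType R) (L : Type) (Xs : L -> X -> Prop).
Hypothesis Hproj : projective_in_sigma M.
Hypothesis HX : in_sigma M X.
Hypothesis Hds : internal_direct_sum Xs.
Let Hsub : forall l, submod (Xs l). Proof. by case: Hds. Qed.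

Lemma rad_sub l (P : X -> Prop) v :
  Mprime_in M (@fullset X) P -> radM_in M (Xs l) v -> P v.
Proof.
move=> [HPs [_ [_ Hpr]]] [Xv Hv].
case: (classic (subset_of (Xs l) P)) => [sub|nsub]; first exact: sub.
suff : P v /\ Xs l v by case.
apply: (Hv (fun y => P y /\ Xs l y)); split; [|split; [|split]].
- split; [split; [exact: Z0 HPs | exact: Z0 (Hsub l)]|split].
  + by move=> x y [h1 h2] [h3 h4]; split; [apply: ZD | apply: ZD].
  + by move=> a x [h1 h2]; split; [apply: ZZ | apply: ZZ].
- by move=> y [].
- apply: NNPP => hn; apply: nsub => y Xy; apply: NNPP => nPy.
  by apply: hn; exists y; split => // [[]].
- move=> N Z' HN HZ' sub' hdot.
  have := Hpr N Z' HN HZ' (fun _ _ => I) (fun z hz => proj1 (hdot z hz)).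
  case=> [h|h]; [left|right].
  + move=> z [Xz hz]; split => //; apply: h; split => // W kW f [fD fZ].
    apply: (hz W kW f); split; [by move=> a b _ _; apply: fD | by move=> a b _; apply: fZ].
  + by move=> z Zz; split; [apply: h | apply: sub'].
Qed.

Lemma pr_rad l y : radM M y -> radM_in M (Xs l) (pr Xs l y).
Proof.
move=> [_ Hy]; split; first exact: pr_in.
move=> Q [HQs [QX [[v [Xv nQv]] Qpr]]].
pose prl := mklin (pr_linear Hds l).
pose P := fun z => Q (pr Xs l z).
apply: (Hy P); split; [|split; [|split]].
- split; [|split].
  + by rewrite /P -[pr Xs l 0]/(prl 0) raddf0; apply: Z0 HQs.
  + move=> a b ha hb; rewrite /P -[pr Xs l (a + b)]/(prl (a + b)) raddfD.
    exact: ZD.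
  + move=> r a ha; rewrite /P.
    have -> : pr Xs l (r *: a) = r *: pr Xs l a.
      by change (prl (r *: a) = r *: prl a); rewrite linearZ.
    exact: ZZ.
- by [].
- by exists v; split => //; rewrite /P pr_id.
- move=> N Z' HN HZ' _ hdot.
  case: (classic (subset_of Z' P)) => [h|nh]; [by right|left].
  have HI := img_submod (pr_linear Hds l) HZ'.
  have hQ : subset_of (dotM N (img (pr Xs l) Z')) Q.
    move=> u /(key_dot Hproj HX (pr_linear Hds l) HZ') [z [dz ->]]; exact: hdot z dz.
  have subI : subset_of (img (pr Xs l) Z') (Xs l).
    by move=> u [z [_ ->]]; apply: pr_in.
  case: (Qpr N _ HN HI subI hQ) => [h|h].
  + move=> y' [_ hy']; apply: h; split; first exact: pr_in.
    move=> W kW f [fD fZ]; apply: (hy' W kW (fun z => f (pr Xs l z))); split.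
    * move=> a b _ _; rewrite -[pr Xs l (a + b)]/(prl (a + b)) raddfD fD //; exact: pr_in.
    * move=> r a _.
      have -> : pr Xs l (r *: a) = r *: pr Xs l a.
        by change (prl (r *: a) = r *: prl a); rewrite linearZ.
      by rewrite fZ //; apply: pr_in.
  + by exfalso; apply: nh => z Zz; apply: h; exists z.
Qed.
End Main.

Theorem proposition2p30 (R : pzRingType) (M X : lmodType R) (L : Type)
  (Xs : L -> X -> Prop) :
  projective_in_sigma M -> in_sigma M X -> internal_direct_sum Xs ->
  forall x : X,
    radM M x <->
    (exists s : seq (L * X)%type,
       (forall p, List.In p s -> radM_in M (Xs p.1) p.2) /\
       x = \sum_(p <- s) p.2).
Proof.
move=> Hproj HX Hds x; split.
- move=> hx.
  have [s [vs es]] := proj1 (proj2 Hds) x.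
  have [t [vt [dt et]]] := exists_dist Hds vs.
  exists t; split; last by rewrite es et.
  move=> p Ip.
  have <- : pr Xs p.1 x = p.2.
    by rewrite (prE Hds p.1 vt); [exact: dist_sumf | rewrite es et].
  exact: pr_rad.
- move=> [s [hs ->]]; split => // P HP.
  have HPs := proj1 HP.
  elim: s hs => [|p s IH] hs; first by rewrite big_nil; apply: Z0 HPs.
  rewrite big_cons; apply: (ZD HPs).
  + by apply: (rad_sub Hds HP); apply: hs; left.
  + by apply: IH => q hq; apply: hs; right.
Qed.
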